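(* For every function $g\in A$ with $g\not\equiv 0$ there exist an orthonormal system $\{\varphi_n\}_{n\ge1}$ on $[0,1]$ and a sequence $a=\{a_n\}\in\ell_2$ such that, with $d_k=1$ for all $k$, $$\limsup_{n\to\infty}\sum_{k=1}^{n}C_k^2(g)\log^2 k=\limsup_{n\to\infty}|U_n(g)|=+\infty,$$ where $C_k(g)=\int_0^1 g(x)\varphi_k(x)\,dx$ and $U_n(g)=\int_0^1 g(x)\sum_{k=1}^n d_k a_k\log k\,\varphi_k(x)\,dx=\sum_{k=1}^n a_k \log k\, C_k(g)$.
   Context: $A$ denotes the Banach space of absolutely continuous functions on $[0,1]$ with norm $\|f\|_A=\max_{[0,1]}|f|+\int_0^1|f'(x)|\,dx$. An orthonormal system on $[0,1]$ is a sequence of functions orthonormal in $L_2(0,1)$. $\log$ denotes the logarithm (so $\log 1=0$). *)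

(* Defs.v *)
From mathcomp Require Import all_boot all_order all_algebra.
From mathcomp Require Import all_classical all_reals all_analysis.
Set Implicit Arguments. Unset Strict Implicit. Unset Printing Implicit Defensive.
Import Order.TTheory GRing.Theory Num.Theory.
Local Open Scope classical_set_scope.
Local Open Scope ring_scope.

Definition I01 (R : realType) : set R := `[(0:R), (1:R)].

Definition abs_continuous01 (R : realType) (f : R -> R) : Prop :=
  forall eps : R, 0 < eps -> exists2 delta : R, 0 < delta &
    forall (n : nat) (a b : 'I_n -> R),
      (forall i, 0 <= a i /\ a i <= b i /\ b i <= 1) ->
      (forall i j, i != j -> b i <= a j \/ b j <= a i) ->
      \sum_(i < n) (b i - a i) < delta ->
      \sum_(i < n) `|f (b i) - f (a i)| < eps.

Definition in_A (R : realType) (f : R -> R) : Prop := abs_continuous01 f.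

Definition orthonormal_system01 (R : realType) (phi : nat -> R -> R) : Prop :=
  (forall n, (1 <= n)%N -> measurable_fun (@I01 R) (phi n)) /\
  (forall n, (1 <= n)%N ->
     (@lebesgue_measure R).-integrable (@I01 R) (fun x => ((phi n x) ^+ 2)%:E)) /\
  (forall n m, (1 <= n)%N -> (1 <= m)%N ->
     (\int[@lebesgue_measure R]_(x in (@I01 R)) (phi n x * phi m x)%:E =
        (if n == m then 1 else 0)%:E)%E).

Definition fourier_coef (R : realType) (phi : nat -> R -> R) (g : R -> R) (k : nat) : R :=
  \int[@lebesgue_measure R]_(x in (@I01 R)) (g x * phi k x).

Definition in_l2 (R : realType) (a : nat -> R) : Prop :=
  (\sum_(1 <= k <oo) ((a k) ^+ 2)%:E < +oo)%E.

(* Main.v *)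
From mathcomp Require Import all_boot all_order all_algebra.
From mathcomp Require Import all_classical all_reals all_analysis.
From mathcomp Require Import ring lra zify.
Require Import Defs.
Import Order.TTheory GRing.Theory Num.Theory numFieldNormedType.Exports.
Local Open Scope classical_set_scope.
Local Open Scope ring_scope.

Lemma esup_pinfty (R : realType) (u W : nat -> R) (e : nat -> nat) (K : R) :
  0 < K -> (forall k, 0 <= u k) -> (forall j, (e j < e j.+1)%N) ->
  (1 <= e 0)%N -> (forall j, K <= u (e j)) ->
  (forall n, \sum_(1 <= k < n.+1) u k <= W n) ->
  limn_esup (fun n => (W n)%:E) = +oo%E.
Proof.
move=> K0 u0 einc e0 uK SW.
pose S n := \sum_(1 <= k < n.+1) u k.
have SS n : S n.+1 = S n + u n.+1 by rewrite /S big_nat_recr.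
have S0 n : 0 <= S n by apply: sumr_ge0.
have Smono n m : (n <= m)%N -> S n <= S m.
  elim: m => [|m IH]; first by rewrite leqn0 => /eqP ->.
  rewrite leq_eqVlt => /orP[/eqP ->//|]; rewrite ltnS => /IH H.
  by rewrite SS; apply: le_trans H _; rewrite lerDl.
have Sej N : N.+1%:R * K <= S (e N).
  elim: N => [|N IH].
    move: e0; case E: (e 0) => [//|m] _.
    by rewrite SS mul1r; apply: le_trans (uK 0) _; rewrite E lerDr.
  have := einc N; case E: (e N.+1) => [//|m]; rewrite ltnS => Hm.
  rewrite SS -E mulrSr mulrDl mul1r; apply: lerD (uK _).
  by apply: le_trans IH (Smono _ _ Hm).
have Wcvg : (fun n => (W n)%:E) @ \oo --> +oo%E.
  apply/cvgeyPge => A.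
  pose N := Num.Def.trunc (A / K).
  have HA : A < N.+1%:R * K.
    by rewrite -ltr_pdivrMr // truncnS_gt.
  near=> n.
  rewrite lee_fin; apply: le_trans (SW n).
  apply: le_trans (ltW HA) _; apply: le_trans (Sej N) _.
  apply: Smono; near: n; by exists (e N).
rewrite is_cvg_limn_esupE; last by apply/cvg_ex; exists +oo%E.
exact: cvg_lim.
Unshelve. all: by end_near.
Qed.
Definition ee (j : nat) : nat := (4 ^ (8 ^ j))%N.
Definition ff (k : nat) : nat := trunc_log 8 (trunc_log 4 k).
Definition spec (k : nat) : bool := k == ee (ff k).
Definition qidx (k : nat) : nat := if spec k then (ff k).*2 else (k.*2).+1.

Lemma ff_ee j : ff (ee j) = j.
Proof. by rewrite /ff /ee !trunc_expnK. Qed.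
Lemma spec_ee j : spec (ee j).
Proof. by rewrite /spec ff_ee. Qed.
Lemma ee_inj : injective ee.
Proof. exact: (can_inj ff_ee). Qed.
Lemma ee_gt j : (j < ee j)%N.
Proof. rewrite /ee; apply: (@ltn_trans (8 ^ j)); exact: ltn_expl. Qed.
Lemma ee_inc j : (ee j < ee j.+1)%N.
Proof. by rewrite /ee ltn_exp2l // ltn_exp2l. Qed.
Lemma ee_ge1 j : (1 <= ee j)%N.
Proof. by rewrite /ee expn_gt0. Qed.
Lemma qidx_inj : injective qidx.
Proof.
move=> k m; rewrite /qidx.
case: (boolP (spec k)) => sk; case: (boolP (spec m)) => sm.
- move=> /eqP; rewrite -!muln2 eqn_pmul2r // => /eqP H.
  by rewrite (eqP sk) (eqP sm) H.
- move=> H; have := congr1 odd H; by rewrite /= !odd_double.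
- move=> H; have := congr1 odd H; by rewrite /= !odd_double.
- by move=> [] /eqP; rewrite -!muln2 eqn_pmul2r // => /eqP.
Qed.
Lemma qidx_ee j : qidx (ee j) = j.*2.
Proof. by rewrite /qidx spec_ee ff_ee. Qed.

Section L2.
Variable R : realType.
Definition aa (k : nat) : R := if spec k then (2^-1) ^+ (ff k) else 0.

Lemma geo_le n : \sum_(0 <= j < n) ((2^-1 : R) ^+ j) <= 2 - 2 * (2^-1) ^+ n.
Proof.
elim: n => [|n IH]; first by rewrite big_geq // expr0; lra.
rewrite big_nat_recr //= exprS; set y := (2^-1 : R) ^+ n.
have : 0 <= y by rewrite exprn_ge0 // invr_ge0.
move: IH; rewrite -/y => IH y0. lra.
Qed.

Lemma aa_sum n : \sum_(1 <= k < n) (aa k) ^+ 2 <= 2.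
Proof.
pose x j := (((2^-1 : R) ^+ j) ^+ 2).
have E k : (k < n)%N -> (aa k) ^+ 2 = \sum_(0 <= j < n) (if k == ee j then x j else 0).
  move=> kn; rewrite -big_mkcond /aa.
  case: (boolP (spec k)) => sk.
    rewrite (eq_bigl (fun j => j == ff k)); last first.
      by move=> j; rewrite {1}(eqP sk) (inj_eq ee_inj) eq_sym.
    have fk : (ff k < n)%N.
      by have := ee_gt (ff k); rewrite -(eqP sk) => H; apply: ltn_trans H kn.
    by rewrite big_nat1_eq /= fk.
  rewrite big_pred0 ?expr0n //= => j; apply/negP => /eqP H.
  by move: sk; rewrite H spec_ee.
rewrite (eq_big_nat _ _ (F2 := fun k => \sum_(0 <= j < n) (if k == ee j then x j else 0))); last first.
  by move=> k /andP[_ kn]; apply: E.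
rewrite exchange_big_nat /=.
apply: (@le_trans _ _ (\sum_(0 <= j < n) ((2^-1 : R) ^+ j))); last first.
  apply: le_trans (geo_le n) _; rewrite gerBl mulr_ge0 // exprn_ge0 // invr_ge0; lra.
apply: ler_sum => j _; rewrite -big_mkcond big_nat1_eq.
have h0 : 0 <= (2^-1 : R) ^+ j by rewrite exprn_ge0 // invr_ge0.
have h1 : (2^-1 : R) ^+ j <= 1 by rewrite exprn_ile1 // ?invr_ge0 ?invf_le1; lra.
case: ifP => _; last by [].
rewrite /x expr2; rewrite ler_piMr //.
Qed.

Lemma aa_l2 : in_l2 aa.
Proof.
rewrite /in_l2; apply: (@le_lt_trans _ _ 2%:E); last by rewrite ltey.
apply: lime_le; first by apply: is_cvg_nneseries => k _ _; rewrite lee_fin sqr_ge0.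
apply: nearW => n /=; rewrite sumEFin lee_fin; exact: aa_sum.
Qed.
End L2.
Lemma bounded_of (R : realType) (A : set R) (f : R -> R) (B : R) :
  (forall x, A x -> `|f x| <= B) -> [bounded f x | x in A].
Proof.
move=> H; rewrite /bounded_near; near=> M => x Ax /=.
apply: le_trans (H x Ax) _; near: M; apply: nbhs_pinfty_ge; exact: num_real.
Unshelve. all: by end_near.
Qed.

Section Ana.
Variables (R : realType) (g : R -> R) (y0 r c M s : R) (p : nat).
Hypothesis y0_ge0 : 0 <= y0.
Hypothesis y0r_le1 : y0 + r <= 1.
Hypothesis c_gt0 : 0 < c.
Hypothesis s2 : s * s = 1.
Hypothesis sabs : `|s| = 1.
Hypothesis M0 : 0 <= M.
Hypothesis gbound : forall z, y0 < z < y0 + r -> c <= s * g z /\ `|g z| <= M.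
Hypothesis gcont : {in `]y0, y0 + r[, continuous g}.

Definition hh (n : nat) : R := 2 ^+ n.
Definition ww (n : nat) : R := (hh n ^+ 2)^-1.
Hypothesis wp_le : ww p <= r.

Lemma hh_gt0 n : 0 < hh n. Proof. by rewrite exprn_gt0. Qed.
Lemma ww_gt0 n : 0 < ww n. Proof. by rewrite invr_gt0 exprn_gt0 // hh_gt0. Qed.
Lemma hhww n : hh n ^+ 2 * ww n = 1.
Proof. by rewrite /ww mulfV // expf_neq0 // gt_eqF // hh_gt0. Qed.
Lemma ww_lt n m : (n < m)%N -> 4 * ww m <= ww n.
Proof.
move=> nm; rewrite /ww.
have H : 4 * hh n ^+ 2 <= hh m ^+ 2.
  rewrite /hh -!exprM; have -> : (4 : R) = 2 ^+ 2 by rewrite expr2; lra.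
  rewrite -exprD ler_eXn2l //; last by lra.
  lia.
have hn := hh_gt0 n; have hm := hh_gt0 m.
have H' : (hh m ^+ 2)^-1 <= (4 * hh n ^+ 2)^-1.
  by rewrite lef_pV2 ?posrE ?mulr_gt0 ?exprn_gt0 //; lra.
rewrite invfM in H'.
have : 4 * (hh m ^+ 2)^-1 <= 4 * (4^-1 * (hh n ^+ 2)^-1) by rewrite ler_pM2l //; lra.
by rewrite mulrA mulfV ?mul1r //; lra.
Qed.

Definition JJ (n : nat) : set R := `]y0 + ww n, y0 + 2 * ww n[.
Lemma JJ_meas n : measurable (JJ n). Proof. exact: measurable_itv. Qed.
Lemma JJ_mu n : lebesgue_measure (JJ n) = (ww n)%:E.
Proof.
rewrite /JJ lebesgue_measure_itv /= lte_fin.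
have := ww_gt0 n => w0; rewrite ltrD2l ifT; last lra.
congr (_%:E); lra.
Qed.
Lemma JJ_sub n : (p < n)%N -> forall x, JJ n x -> y0 < x < y0 + r.
Proof.
move=> pn x; rewrite /JJ /= in_itv /= => /andP[h1 h2].
have {h1}h1 : y0 + ww n < x := h1. have {h2}h2 : x < y0 + 2 * ww n := h2. have A1 := ww_lt _ _ pn; have A2 := ww_gt0 n; have A3 := ww_gt0 p. have B1 : y0 < x by lra. have C1 : 2 * ww n < ww p by lra. have wp2 : ww p <= r := wp_le. have C2 : 2 * ww n < r by lra. have B2 : x < y0 + r by lra. by rewrite B1 B2.
Qed.
Lemma JJ_I01 n : (p < n)%N -> JJ n `<=` @I01 R.
Proof.
move=> pn x /(JJ_sub _ pn) /andP[h1 h2]; rewrite /I01 /= in_itv /=; have y0' : 0 <= y0 := y0_ge0. have y1 : y0 + r <= 1 := y0r_le1. apply/andP; split; lra.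
Qed.
Lemma JJ_disj n m : n != m -> forall x, JJ n x -> JJ m x -> False.
Proof.
wlog nm : n m / (n < m)%N.
  move=> W; rewrite neq_ltn => /orP[H|H] x h1 h2.
    by apply: (W n m H _ x h1 h2); rewrite neq_ltn H.
  by apply: (W m n H _ x h2 h1); rewrite neq_ltn H.
move=> _ x; rewrite /JJ /= !in_itv /= => /andP[h1 h2] /andP[h3 h4].
have {h1}h1 : y0 + ww n < x := h1. have {h4}h4 : x < y0 + 2 * ww m := h4.
have A1 := ww_lt _ _ nm; have A2 := ww_gt0 m; lra.
Qed.

Definition QQ (k : nat) : nat := (k + p + 1)%N.
Lemma QQ_gt k : (p < QQ k)%N. Proof. rewrite /QQ; lia. Qed.

Definition NN (k : nat) : nat := QQ (qidx k).
Lemma NN_inj : injective NN.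
Proof. move=> k m; rewrite /NN /QQ => H; apply: qidx_inj; lia. Qed.
Lemma NN_gt k : (p < NN k)%N. Proof. exact: QQ_gt. Qed.

Definition phi (k : nat) : R -> R := (fun _ : R => s * hh (NN k)) \_ (JJ (NN k)).

Lemma I01_meas : measurable (@I01 R). Proof. exact: measurable_itv. Qed.
Lemma I01_fin : (lebesgue_measure (@I01 R) < +oo)%E.
Proof. by rewrite /I01 lebesgue_measure_itv /=; case: ifP => _; rewrite ltry. Qed.
Lemma JJ_fin n : (lebesgue_measure (JJ n) < +oo)%E.
Proof. by rewrite JJ_mu ltry. Qed.

Lemma mbi (A : set R) (f : R -> R) (B : R) : measurable A ->
  (lebesgue_measure A < +oo)%E -> measurable_fun A f ->
  (forall x, A x -> `|f x| <= B) -> lebesgue_measure.-integrable A (EFin \o f).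
Proof.
move=> mA Afin mf Hb; apply: measurable_bounded_integrable => //.
exact: bounded_of Hb.
Qed.

Lemma patch_meas (f : R -> R) n : (p < n)%N -> measurable_fun (JJ n) f ->
  measurable_fun (@I01 R) (f \_ (JJ n)).
Proof.
move=> pn mf; apply/(measurable_restrict _ (JJ_meas n) I01_meas).
by rewrite setIidr //; exact: JJ_I01.
Qed.

Lemma patch_bound (f : R -> R) (A : set R) B x : 0 <= B ->
  (forall y, A y -> `|f y| <= B) -> `|(f \_ A) x| <= B.
Proof.
move=> B0 H; rewrite /patch; case: ifPn => [/set_mem /H //|_]; by rewrite normr0.
Qed.

Lemma phi_meas k : measurable_fun (@I01 R) (phi k).
Proof. apply: patch_meas; [exact: NN_gt | exact: measurable_cst]. Qed.

Lemma phi2_int k : lebesgue_measure.-integrable (@I01 R) (fun x => ((phi k x) ^+ 2)%:E).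
Proof.
apply: (@mbi _ (fun x => (phi k x) ^+ 2) (hh (NN k) ^+ 2)).
- exact: I01_meas.
- exact: I01_fin.
- exact: measurable_realfun.measurable_funX (phi_meas k).
- move=> x _.
  have H : `|phi k x| <= hh (NN k).
    rewrite /phi; apply: patch_bound; first exact: ltW (hh_gt0 _).
    move=> y _; rewrite normrM sabs mul1r ger0_norm //; exact: ltW (hh_gt0 _).
  by rewrite normrX !expr2; apply: ler_pM.
Qed.


Lemma phi_orth n m : (\int[lebesgue_measure]_(x in (@I01 R)) (phi n x * phi m x)%:E =
        (if n == m then 1 else 0)%:E)%E.
Proof.
case: eqVneq => [<-|nm].
  have -> : (fun x => (phi n x * phi n x)%:E) =
      ((fun _ => (hh (NN n) ^+ 2)%:E) \_ (JJ (NN n))).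
    apply/funext => x; rewrite /phi /patch; case: ifP => _ //.
    by rewrite mulrACA s2 mul1r expr2.
    by rewrite mulr0.
  rewrite -integral_mkcondr setIidr; last exact: JJ_I01 (NN_gt n).
  rewrite integral_cst; last exact: JJ_meas.
  rewrite (_ : _ (JJ (NN n)) = (ww (NN n))%:E); last exact: JJ_mu.
  by rewrite -EFinM hhww.
have -> : (fun x => (phi n x * phi m x)%:E) = cst 0%E.
  apply/funext => x; rewrite /phi /patch /=.
  case: ifPn => [/set_mem h1|]; last by rewrite mul0r.
  case: ifPn => [/set_mem h2|]; last by rewrite mulr0.
  exfalso; apply: (JJ_disj _ _ _ x h1 h2).
  by rewrite (inj_eq NN_inj).
by rewrite integral0.
Qed.

Lemma g_meas n : (p < n)%N -> measurable_fun (JJ n) g.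
Proof.
move=> pn; apply: measurable_realfun.open_continuous_measurable_fun; first exact: itv_open.
move=> x /set_mem /(JJ_sub _ pn) H; apply: gcont.
by rewrite in_itv /=.
Qed.

Lemma g_int n : (p < n)%N -> lebesgue_measure.-integrable (JJ n) (EFin \o g).
Proof.
move=> pn; apply: (@mbi _ _ M).
- exact: JJ_meas.
- exact: JJ_fin.
- exact: g_meas.
by move=> x /(JJ_sub _ pn) /gbound [].
Qed.

Lemma gphi k : (fun x => g x * phi k x) = (fun x => g x * (s * hh (NN k))) \_ (JJ (NN k)).
Proof.
apply/funext => x; rewrite /phi /patch; case: ifP => _ //; by rewrite mulr0.
Qed.

Lemma gphi_int k : lebesgue_measure.-integrable (@I01 R) (EFin \o (fun x => g x * phi k x)).
Proof.
rewrite gphi; apply: (@mbi _ _ (M * hh (NN k))).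
- exact: I01_meas.
- exact: I01_fin.
- apply: patch_meas; first exact: NN_gt.
  apply: measurable_realfun.measurable_funM; [exact: g_meas (NN_gt k)| exact: measurable_cst].
- move=> x _; apply: patch_bound.
    by apply: mulr_ge0; last exact: ltW (hh_gt0 _).
  move=> y /(JJ_sub _ (NN_gt k)) /gbound [_ H].
  rewrite normrM normrM sabs mul1r (ger0_norm (ltW (hh_gt0 _))).
  by apply: ler_wpM2r => //; exact: ltW (hh_gt0 _).
Qed.

Lemma fc k : fourier_coef phi g k = (\int[lebesgue_measure]_(x in JJ (NN k)) g x) * (s * hh (NN k)).
Proof.
rewrite /fourier_coef gphi -Rintegral_mkcondr setIidr; last exact: JJ_I01 (NN_gt k).
rewrite RintegralZr //; [exact: JJ_meas | exact: g_int (NN_gt k)].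
Qed.

Lemma fc_ge k : c / hh (NN k) <= fourier_coef phi g k.
Proof.
rewrite fc; set N := NN k.
have hN := hh_gt0 N.
have -> : (\int[lebesgue_measure]_(x in JJ N) g x) * (s * hh N) =
   (s * \int[lebesgue_measure]_(x in JJ N) g x) * hh N by rewrite mulrCA mulrA.
rewrite -RintegralZl; [|exact: JJ_meas|exact: g_int (NN_gt k)].
have E : c / hh N = (c * ww N) * hh N.
  by rewrite /ww; field; rewrite gt_eqF.
rewrite E ler_pM2r //.
have -> : c * ww N = \int[lebesgue_measure]_(x in JJ N) c.
  rewrite Rintegral_cst; last exact: JJ_meas.
  by rewrite (_ : _ (JJ N) = (ww N)%:E); last exact: JJ_mu.
apply: le_Rintegral; first exact: JJ_meas.
- apply: (@mbi _ _ c (JJ_meas N) (JJ_fin N)); first exact: measurable_cst.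
  by move=> x _; rewrite ger0_norm // ltW.
- apply: (@mbi _ _ M (JJ_meas N) (JJ_fin N)).
    apply: measurable_realfun.measurable_funM; [exact: measurable_cst | exact: g_meas (NN_gt k)].
  by move=> x /(JJ_sub _ (NN_gt k)) /gbound [_ H]; rewrite normrM sabs mul1r.
- by move=> x /(JJ_sub _ (NN_gt k)) /gbound [].
Qed.


Lemma sum_int (b : nat -> R) n :
  lebesgue_measure.-integrable (@I01 R)
    (EFin \o (fun x => g x * \sum_(1 <= k < n.+1) (b k * phi k x))) /\
  \int[lebesgue_measure]_(x in (@I01 R)) (g x * \sum_(1 <= k < n.+1) (b k * phi k x))
  = \sum_(1 <= k < n.+1) (b k * fourier_coef phi g k).
Proof.
elim: n => [|n [IHi IHe]].
  have E : (fun x => g x * \sum_(1 <= k < 1) (b k * phi k x)) = (fun _ => 0).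
    by apply/funext => x; rewrite big_geq // mulr0.
  rewrite E big_geq //; split.
    apply: (@mbi _ _ 0); [exact: I01_meas|exact: I01_fin|exact: measurable_cst|].
    by move=> x _; rewrite normr0.
  by rewrite Rintegral_cst ?mul0r //; exact: I01_meas.
have E : (fun x => g x * \sum_(1 <= k < n.+2) (b k * phi k x)) =
   (fun x => g x * \sum_(1 <= k < n.+1) (b k * phi k x) + b n.+1 * (g x * phi n.+1 x)).
  apply/funext => x; rewrite big_nat_recr //=; ring.
have I2 : lebesgue_measure.-integrable (@I01 R) (EFin \o (fun x => b n.+1 * (g x * phi n.+1 x))).
  have J : lebesgue_measure.-integrable (@I01 R)
      (fun x => ((b n.+1)%:E * (EFin \o (fun x => (g x * phi n.+1 x)%R)) x)%E).
    apply: (integrableZl _ (b n.+1) (gphi_int n.+1)); exact: I01_meas.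
  apply: (eq_integrable _ _ _ _ J); [exact: I01_meas | by move=> x _].
rewrite E; split.
  have J : lebesgue_measure.-integrable (@I01 R)
     ((EFin \o (fun x => (g x * \sum_(1 <= k < n.+1) (b k * phi k x))%R)) \+
     (EFin \o (fun x => (b n.+1 * (g x * phi n.+1 x))%R)))%E.
    by apply: integrableD => //; exact: I01_meas.
  apply: (eq_integrable _ _ _ _ J); [exact: I01_meas | by move=> x _].
rewrite RintegralD; [|exact: I01_meas|exact: IHi|exact: I2].
rewrite IHe RintegralZl; [|exact: I01_meas|exact: gphi_int].
by rewrite [in RHS]big_nat_recr //=.
Qed.

End Ana.

Lemma UC (R : realType) (g : R -> R) : in_A g ->
  forall eps : R, 0 < eps -> exists2 del : R, 0 < del &
    forall u v, 0 <= u <= 1 -> 0 <= v <= 1 -> `|u - v| < del -> `|g u - g v| < eps.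
Proof.
move=> gA eps e0; have [del d0 H] := gA eps e0; exists del => //.
have key : forall u v, 0 <= u -> u <= v -> v <= 1 -> v - u < del -> `|g v - g u| < eps.
  move=> u v h1 h2 h3 h4.
  have := H 1%N (fun _ => u) (fun _ => v).
  rewrite !big_ord1; apply => //.
  by move=> i j; rewrite !ord1 eqxx.
move=> u v /andP[u0 u1] /andP[v0 v1] uv.
case: (leP u v) => h.
  rewrite distrC; apply: key => //.
  by move: uv; rewrite distrC ger0_norm // subr_ge0.
apply: key => //; first exact: ltW.
by move: uv; rewrite ger0_norm // subr_ge0 ltW.
Qed.

Lemma cont_int (R : realType) (g : R -> R) : in_A g ->
  forall z : R, 0 < z < 1 -> {for z, continuous g}.
Proof.
move=> gA z /andP[z0 z1]; apply/cvgrPdist_lt => eps e0.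
have [del d0 H] := @UC R g gA eps e0.
apply/nbhs_ballP; exists (Num.min del (Num.min z (1 - z))).
  by rewrite /= !lt_min d0 z0 subr_gt0 z1.
move=> t; rewrite /ball /= !lt_min => /andP[h1 /andP[h2 h3]].
apply: H => //.
- by rewrite ltW ?z0 ?ltW.
- move: h2 h3; rewrite !ltr_norml => /andP[a1 a2] /andP[a3 a4].
  apply/andP; split; lra.
Qed.

Lemma num_key (R : realType) (X L H c C : R) : 0 < X -> 0 < L -> 0 < H -> 0 < c ->
  c / (X ^+ 2 * H) <= C -> c * L / H * X <= C * (L * X ^+ 3).
Proof.
move=> X0 L0 H0 c0 HC.
have -> : c * L / H * X = c / (X ^+ 2 * H) * (L * X ^+ 3).
  by field; rewrite !gt_eqF.
by rewrite ler_wpM2r // ltW // mulr_gt0 // exprn_gt0.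
Qed.

Lemma ln_ee (R : realType) j : ln ((ee j)%:R : R) = ln 4 * (2 ^+ j) ^+ 3.
Proof.
have E : ((2 : R) ^+ j) ^+ 3 = ((8 ^ j)%N)%:R.
  by rewrite natrX -exprM mulnC exprM -natrX.
rewrite /ee natrX lnXn ?ltr0n // E mulr_natr //.
Qed.

Lemma hh_ee (R : realType) p j : hh R (NN p (ee j)) = (2 ^+ j) ^+ 2 * hh R p.+1.
Proof.
rewrite /NN qidx_ee /QQ /hh -exprM -exprD; congr (_ ^+ _); lia.
Qed.

Theorem theorem4 (R : realType) (g : R -> R) :
  in_A g ->
  (exists x : R, 0 <= x <= 1 /\ g x != 0) ->
  exists (phi : nat -> R -> R) (a : nat -> R),
    orthonormal_system01 phi /\ in_l2 a /\
    let d : nat -> R := fun _ => 1 in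
    limn_esup (fun n : nat =>
      (\sum_(1 <= k < n.+1) ((fourier_coef phi g k) ^+ 2 * (ln (k%:R : R)) ^+ 2))%:E)
      = +oo%E /\
    limn_esup (fun n : nat =>
      (`| \int[@lebesgue_measure R]_(x in (@I01 R))
            (g x * \sum_(1 <= k < n.+1) (d k * a k * ln (k%:R : R) * phi k x)) |)%:E)
      = +oo%E.
Proof.
move=> gA [x0 [/andP[x00 x01] gx0]].
pose s : R := if 0 < g x0 then 1 else -1.
have s2 : s * s = 1 by rewrite /s; case: ifP => _; rewrite ?mulr1 ?mulrNN ?mulr1.
have sabs : `|s| = 1 by rewrite /s; case: ifP => _; rewrite ?normrN normr1.
have sg : s * g x0 = `|g x0|.
  rewrite /s; case: ifP => h; first by rewrite mul1r gtr0_norm.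
  rewrite mulN1r ltr0_norm //; rewrite lt_neqAle gx0 /=; by rewrite leNgt h.
pose c := `|g x0| / 2.
have c0 : 0 < c by rewrite divr_gt0 // normr_gt0.
have [del d0 Hd] := @UC R g gA c c0.
pose t := Num.min del 1 / 4.
have t0 : 0 < t by rewrite divr_gt0 // lt_min d0 ltr01.
have t1 : t <= del / 4 by rewrite ler_pM2r // ge_min lexx.
have t2 : t <= 1 / 4 by rewrite ler_pM2r // ge_min lexx orbT.
pose y0 := if x0 <= 1/2 then x0 else x0 - 2 * t.
pose r := 2 * t.
have Hy : [/\ 0 <= y0, y0 + r <= 1 &
    forall z, y0 < z < y0 + r -> [/\ 0 < z, z < 1 & `|z - x0| < del]].
  rewrite /y0 /r; case: ifP => h.
    split; [lra|lra|] => z /andP[z1 z2]; rewrite ltr_norml; split; lra.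
  move/negbT: h; rewrite -ltNge => h.
  split; [lra|lra|] => z /andP[z1 z2]; rewrite ltr_norml; split; lra.
case: Hy => y00 y0r Hz.
pose M := 3 * c.
have M0 : 0 <= M by rewrite mulr_ge0 // ltW.
have gbound : forall z, y0 < z < y0 + r -> c <= s * g z /\ `|g z| <= M.
  move=> z /Hz [z0 z1 zx].
  have hz : `|g z - g x0| < c.
    apply: Hd; [by rewrite (ltW z0) (ltW z1) | by rewrite x00 x01 | exact: zx].
  have e1 : s * g z = `|g x0| + s * (g z - g x0) by rewrite mulrBr sg addrC subrK.
  have e2 : `|s * (g z - g x0)| < c by rewrite normrM sabs mul1r; exact: hz.
  move: e2; rewrite ltr_norml => /andP[e2 e3].
  have cc : `|g x0| = 2 * c by rewrite /c; field.
  split; first by rewrite e1; lra.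
  have : `|g z| <= `|g x0| + `|g z - g x0|.
    by rewrite -[in X in `|X|](subrK (g x0) (g z)) addrC ler_normD.
  rewrite /M => h; lra.
have gcont : {in `]y0, y0 + r[, continuous g}.
  move=> z; rewrite in_itv /= => /Hz [z0 z1 _].
  by apply: cont_int => //; rewrite z0 z1.
pose p := Num.Def.trunc (r^-1).
have wp : ww R p <= r.
  have r0 : 0 < r by rewrite /r; lra.
  have h1 : r^-1 < p.+1%:R by exact: truncnS_gt.
  have h2 : (p.+1%:R : R) <= hh R p ^+ 2.
    rewrite /hh -exprM mulnC exprM (_ : (2 : R) ^+ 2 = 4%:R); last by rewrite expr2 -natrM.
    by rewrite -natrX ler_nat; exact: ltn_expl.
  rewrite /ww -[X in _ <= X]invrK ltW // ltf_pV2 ?posrE ?invr_gt0 ?exprn_gt0 ?hh_gt0 //.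
  exact: lt_le_trans h1 h2.
pose ph := phi R y0 s p.
pose K0 := c * ln 4 / hh R p.+1.
have K0p : 0 < K0.
  by rewrite /K0 divr_gt0 ?hh_gt0 // mulr_gt0 // ln_gt0 // ltr1n.
have fcg k : c / hh R (NN p k) <= fourier_coef ph g k.
  exact: (@fc_ge R g y0 r c M s p y00 y0r c0 sabs M0 gbound gcont wp k).
have fcpos k : 0 < fourier_coef ph g k.
  by apply: lt_le_trans (fcg k); rewrite divr_gt0 // hh_gt0.
have key j : K0 * 2 ^+ j <= fourier_coef ph g (ee j) * ln ((ee j)%:R).
  rewrite ln_ee /K0; apply: num_key => //.
  - by rewrite ln_gt0 // ltr1n.
  - exact: hh_gt0.
  - by rewrite -hh_ee.
have X1 j : (1 : R) <= 2 ^+ j by rewrite exprn_ege1 // ler1n.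
exists ph, (aa R); split.
  split; [move=> n _| split; [move=> n _| move=> n m _ _]].
  - exact: (@phi_meas R y0 r c M s p y00 y0r c0 M0 wp n).
  - exact: (@phi2_int R y0 r c M s p y00 y0r c0 sabs M0 wp n).
  - exact: (@phi_orth R y0 r c M s p y00 y0r c0 s2 M0 wp n m).
split; first exact: aa_l2.
move=> d; split.
  apply: (@esup_pinfty R (fun k => (fourier_coef ph g k) ^+ 2 * (ln (k%:R : R)) ^+ 2) _ ee (K0 ^+ 2)).
  - exact: exprn_gt0 K0p.
  - by move=> k; rewrite mulr_ge0 // sqr_ge0.
  - exact: ee_inc.
  - exact: ee_ge1.
  - move=> j.
    have h2 : K0 <= fourier_coef ph g (ee j) * ln ((ee j)%:R).
      apply: le_trans (key j); rewrite ler_peMr ?X1 //; exact: ltW.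
    rewrite -exprMn !expr2; apply: ler_pM => //; exact: ltW.
  - by move=> n.
apply: (@esup_pinfty R (fun k => (d k * aa R k * ln (k%:R : R)) * fourier_coef ph g k) _ ee K0).
- exact: K0p.
- move=> k; apply: mulr_ge0; last exact: ltW.
  rewrite /d mul1r; case: k => [|k].
    by rewrite /aa /spec eq_sym eqn0Ngt ee_ge1 mul0r.
  apply: mulr_ge0; last by rewrite ln_ge0 // ler1n.
  by rewrite /aa; case: ifP => _ //; rewrite exprn_ge0 // invr_ge0.
- exact: ee_inc.
- exact: ee_ge1.
- move=> j; rewrite /d mul1r /aa spec_ee ff_ee -mulrA mulrC -mulrA.
  rewrite mulrA (mulrC (ln _)).
  have xj0 : (0 : R) <= 2^-1 ^+ j by rewrite exprn_ge0 // invr_ge0.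
  apply: le_trans (ler_wpM2r xj0 (key j)).
  by rewrite exprVn mulrK // unitfE expf_neq0.
- move=> n.
  have := (@sum_int R g y0 r c M s p y00 y0r c0 sabs M0 gbound gcont wp
     (fun k => d k * aa R k * ln (k%:R : R)) n).2 => /= ->.
  exact: ler_norm.
Qed.
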